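(* For the full shift $(\Sigma,\sigma)$, there is a dense Mycielski subset $S\subset\Sigma$ with $\sigma(S)\subset S$ which is Banach scrambled for $\sigma$.
   Context: $\Sigma=\{0,1\}^{\mathbb{Z}_+}$ with the product topology (and a compatible metric $d$) and shift map $\sigma(x)_n=x_{n+1}$. A set $F\subset\mathbb{Z}_+$ has Banach density one if for every $\lambda<1$ there is $N\ge1$ with $\#(F\cap I)\ge\lambda\,\#(I)$ for every interval of integers $I\subset\mathbb{Z}_+$ with $\#(I)\ge N$. A pair $(x,y)$ is Banach proximal if for every $\varepsilon>0$ the set $\{n: d(\sigma^nx,\sigma^ny)<\varepsilon\}$ has Banach density one; it is asymptotic if $d(\sigma^nx,\sigma^ny)\to0$. A subset with at least two points is Banach scrambled if every pair of distinct points in it is Banach proximal but not asymptotic. A Mycielski set is a countable union of Cantor sets. *)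

(* Defs.v *)
From Stdlib Require Import Reals Lra Lia Classical ClassicalEpsilon.
Open Scope R_scope.

Definition Sigma := nat -> bool.

Definition shift (x : Sigma) : Sigma := fun k => x (S k).

Definition shift_iter (n : nat) (x : Sigma) : Sigma := Nat.iter n shift x.

Definition agree_upto (k : nat) (x y : Sigma) : Prop :=
  forall i, (i < k)%nat -> x i = y i.

Definition is_metric (d : Sigma -> Sigma -> R) : Prop :=
  (forall x y, 0 <= d x y) /\
  (forall x y, d x y = 0 <-> x = y) /\
  (forall x y, d x y = d y x) /\
  (forall x y z, d x z <= d x y + d y z).

(** d induces the product topology: at every point, metric balls and
    cylinder sets form equivalent neighbourhood bases. *)
Definition compatible_metric (d : Sigma -> Sigma -> R) : Prop :=
  is_metric d /\
  (forall x eps, 0 < eps -> exists k, forall y, agree_upto k x y -> d x y < eps) /\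
  (forall x k, exists eps, 0 < eps /\ forall y, d x y < eps -> agree_upto k x y).

Fixpoint count_in (F : nat -> Prop) (a L : nat) : nat :=
  match L with
  | O => O
  | S L' => ((if excluded_middle_informative (F (a + L')%nat) then 1 else 0)
             + count_in F a L')%nat
  end.

Definition banach_density_one (F : nat -> Prop) : Prop :=
  forall lam : R, lam < 1 ->
    exists N : nat, (1 <= N)%nat /\
      forall a L : nat, (N <= L)%nat -> INR (count_in F a L) >= lam * INR L.

Definition banach_proximal (d : Sigma -> Sigma -> R) (x y : Sigma) : Prop :=
  forall eps, 0 < eps ->
    banach_density_one (fun n => d (shift_iter n x) (shift_iter n y) < eps).

Definition asymptotic (d : Sigma -> Sigma -> R) (x y : Sigma) : Prop :=
  forall eps, 0 < eps -> exists N : nat,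
    forall n, (N <= n)%nat -> d (shift_iter n x) (shift_iter n y) < eps.

Definition banach_scrambled (d : Sigma -> Sigma -> R) (S : Sigma -> Prop) : Prop :=
  (exists x y, S x /\ S y /\ x <> y) /\
  (forall x y, S x -> S y -> x <> y ->
     banach_proximal d x y /\ ~ asymptotic d x y).

Definition continuous_wrt (d : Sigma -> Sigma -> R) (f : Sigma -> Sigma) : Prop :=
  forall x eps, 0 < eps -> exists delta, 0 < delta /\
    forall y, d x y < delta -> d (f x) (f y) < eps.

(** A Cantor set: a subset homeomorphic to the Cantor space {0,1}^N, i.e.
    the image of a continuous injection of the compact space Sigma. *)
Definition cantor_set (d : Sigma -> Sigma -> R) (C : Sigma -> Prop) : Prop :=
  exists f : Sigma -> Sigma, continuous_wrt d f /\
    (forall u v, f u = f v -> u = v) /\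
    (forall y, C y <-> exists u, y = f u).

Definition mycielski (d : Sigma -> Sigma -> R) (S : Sigma -> Prop) : Prop :=
  exists C : nat -> (Sigma -> Prop),
    (forall n, cantor_set d (C n)) /\
    (forall y, S y <-> exists n, C n y).

Definition dense (d : Sigma -> Sigma -> R) (S : Sigma -> Prop) : Prop :=
  forall x eps, 0 < eps -> exists y, S y /\ d x y < eps.

(* Main.v *)
Require Import Defs.
From Stdlib Require Import Reals Lra Lia Arith Classical ClassicalEpsilon FunctionalExtensionality.
Open Scope R_scope.

Definition cd (k : nat) (u : Sigma) (i : nat) : bool :=
  if Nat.ltb i k then true else if Nat.eqb i k then false else u (i - k - 1)%nat.
Definition ee (k : nat) (u : Sigma) (i : nat) : bool :=
  match i with O => true | S i' => cd k u i' end.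
Definition ispow (p : nat) : bool := Nat.eqb p (2 ^ Nat.log2 p).
Definition idx (t : nat) : nat := (t - Nat.sqrt t * Nat.sqrt t)%nat.
Definition ff (k : nat) (u : Sigma) (p : nat) : bool :=
  if Nat.ltb p k then u p else if ispow p then ee k u (idx (Nat.log2 p)) else false.
Definition gg (m k : nat) (u : Sigma) : Sigma := shift_iter m (ff k u).

Lemma shift_iter_app : forall n x i, shift_iter n x i = x (n + i)%nat.
Proof.
  induction n as [|n IH]; intros x i; [reflexivity|].
  change (shift_iter (S n) x i) with (shift (shift_iter n x) i).
  unfold shift. rewrite IH. f_equal. lia.
Qed.

Lemma gg_app : forall m k u n i, shift_iter n (gg m k u) i = ff k u (m + (n + i))%nat.
Proof. intros. unfold gg. rewrite !shift_iter_app. reflexivity. Qed.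

Lemma notpow : forall t p, (2 ^ t < p)%nat -> (p < 2 ^ S t)%nat -> ispow p = false.
Proof.
  intros t p H1 H2. unfold ispow. destruct (Nat.eqb_spec p (2 ^ Nat.log2 p)) as [E|]; auto.
  exfalso. rewrite E in H1, H2.
  apply (Nat.pow_lt_mono_r_iff 2) in H1; [|lia].
  apply (Nat.pow_lt_mono_r_iff 2) in H2; [|lia]. lia.
Qed.

Lemma ispow_pow : forall t, ispow (2 ^ t) = true.
Proof. intros. unfold ispow. rewrite Nat.log2_pow2; [apply Nat.eqb_refl|lia]. Qed.

Lemma pow_gap : forall p p', ispow p = true -> ispow p' = true -> (p < p')%nat -> (2 * p <= p')%nat.
Proof.
  intros p p' H H' Hl. unfold ispow in *. apply Nat.eqb_eq in H, H'.
  rewrite H, H' in *. set (s := Nat.log2 p) in *. set (s' := Nat.log2 p') in *.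
  apply (Nat.pow_lt_mono_r_iff 2) in Hl; [|lia].
  assert (2 ^ S s <= 2 ^ s')%nat by (apply Nat.pow_le_mono_r; lia).
  simpl in H0. lia.
Qed.

Lemma ff_zero : forall k u p, (k <= p)%nat -> ispow p = false -> ff k u p = false.
Proof. intros. unfold ff. rewrite (proj2 (Nat.ltb_ge p k) H), H0. reflexivity. Qed.

Lemma ff_pow : forall k u t, (k <= 2 ^ t)%nat -> ff k u (2 ^ t) = ee k u (idx t).
Proof.
  intros. unfold ff. rewrite (proj2 (Nat.ltb_ge _ k) H), ispow_pow, Nat.log2_pow2; auto; lia.
Qed.

Lemma sqrt_eq : forall s i, (i <= 2 * s)%nat -> Nat.sqrt (s * s + i) = s.
Proof. intros. apply Nat.sqrt_unique. nia. Qed.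

Lemma idx_eq : forall s i, (i <= 2 * s)%nat -> idx (s * s + i) = i.
Proof. intros. unfold idx. rewrite sqrt_eq; lia. Qed.

Lemma idx_inf : forall i T, exists t, (T <= t)%nat /\ (T < 2 ^ t)%nat /\ idx t = i.
Proof.
  intros i T. exists ((i + T) * (i + T) + i)%nat. split; [nia|]. split.
  - assert (T <= (i + T) * (i + T) + i)%nat by nia.
    pose proof (Nat.pow_gt_lin_r 2 ((i + T) * (i + T) + i)%nat). lia.
  - apply idx_eq. lia.
Qed.

Lemma decode : forall k u k' v, (forall i, ee k u i = ee k' v i) -> k = k' /\ forall j, u j = v j.
Proof.
  intros k u k' v H.
  assert (Hc : forall i, cd k u i = cd k' v i) by (intro i; exact (H (S i))).
  assert (k = k').
  { destruct (Nat.lt_trichotomy k k') as [Hl|[Hl|Hl]]; auto; exfalso.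
    - specialize (Hc k). unfold cd in Hc. rewrite Nat.ltb_irrefl, Nat.eqb_refl in Hc.
      rewrite (proj2 (Nat.ltb_lt k k') Hl) in Hc. discriminate.
    - specialize (Hc k'). unfold cd in Hc. rewrite Nat.ltb_irrefl, Nat.eqb_refl in Hc.
      rewrite (proj2 (Nat.ltb_lt k' k) Hl) in Hc. discriminate. }
  subst k'. split; auto. intro j. specialize (Hc (j + k + 1)%nat). unfold cd in Hc.
  rewrite (proj2 (Nat.ltb_ge _ _)), (proj2 (Nat.eqb_neq _ _)) in Hc by lia.
  replace (j + k + 1 - k - 1)%nat with j in Hc by lia. exact Hc.
Qed.

Lemma ff_dep : forall k u v p, agree_upto (S p) u v -> ff k u p = ff k v p.
Proof.
  intros k u v p H. unfold ff. destruct (Nat.ltb p k). { apply H. lia. }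
  destruct (ispow p); auto.
  assert (Hi : (idx (Nat.log2 p) <= p)%nat).
  { unfold idx. pose proof (Nat.log2_le_lin p). lia. }
  destruct (idx (Nat.log2 p)) as [|i]; auto. simpl. unfold cd.
  destruct (Nat.ltb i k); auto. destruct (Nat.eqb i k); auto. apply H. lia.
Qed.

Lemma gg_fin : forall m k j u v, agree_upto (j + m) u v -> agree_upto j (gg m k u) (gg m k v).
Proof.
  intros m k j u v H i Hi. unfold gg. rewrite !shift_iter_app. apply ff_dep.
  intros q Hq. apply H. lia.
Qed.

Lemma gg_inj : forall m k u v, gg m k u = gg m k v -> u = v.
Proof.
  intros m k u v H. apply functional_extensionality.
  assert (He : forall i, ee k u i = ee k v i).
  { intro i. destruct (idx_inf i (m + k)) as [t [_ [Ht Hi]]].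
    pose proof (f_equal (fun z => z (2 ^ t - m)%nat) H) as E. simpl in E.
    unfold gg in E. rewrite !shift_iter_app in E.
    replace (m + (2 ^ t - m))%nat with (2 ^ t)%nat in E by lia.
    rewrite !ff_pow in E by lia. rewrite Hi in E. exact E. }
  apply (decode _ _ _ _ He).
Qed.


Lemma count_le : forall F a L, (count_in F a L <= L)%nat.
Proof. intros F a L; induction L; simpl; [lia|]. destruct excluded_middle_informative; lia. Qed.

Lemma count_compl : forall F a L, (count_in F a L + count_in (fun n => ~ F n) a L)%nat = L.
Proof.
  intros F a L; induction L; simpl; auto.
  destruct (excluded_middle_informative (F (a + L)%nat));
  destruct (excluded_middle_informative (~ F (a + L)%nat)); try tauto; lia.
Qed.

Lemma count_mono : forall (F G : nat -> Prop) a L, (forall n, F n -> G n) ->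
  (count_in F a L <= count_in G a L)%nat.
Proof.
  intros F G a L H; induction L; simpl; auto.
  destruct (excluded_middle_informative (F (a + L)%nat));
  destruct (excluded_middle_informative (G (a + L)%nat)); try lia.
  exfalso; auto.
Qed.

Lemma count_or : forall (F G : nat -> Prop) a L,
  (count_in (fun n => F n \/ G n) a L <= count_in F a L + count_in G a L)%nat.
Proof.
  intros F G a L; induction L; simpl; auto.
  destruct (excluded_middle_informative (F (a + L)%nat \/ G (a + L)%nat));
  destruct (excluded_middle_informative (F (a + L)%nat));
  destruct (excluded_middle_informative (G (a + L)%nat)); try lia. tauto.
Qed.

Lemma count_lt : forall B a L, (count_in (fun n => (n < B)%nat) a L = Nat.min L (B - a))%nat.
Proof.
  intros B a L; induction L. { simpl. reflexivity. }
  change (count_in (fun n => (n < B)%nat) a (S L)) with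
   ((if excluded_middle_informative (a + L < B)%nat then 1 else 0) + count_in (fun n => (n < B)%nat) a L)%nat.
  rewrite IHL; destruct (excluded_middle_informative (a + L < B)%nat); lia.
Qed.

Lemma count_split : forall F a L1 L2,
  count_in F a (L1 + L2) = (count_in F (a + L1) L2 + count_in F a L1)%nat.
Proof.
  intros F a L1 L2; induction L2; simpl.
  - rewrite Nat.add_0_r. reflexivity.
  - rewrite Nat.add_succ_r. cbn [count_in]. rewrite IHL2. replace (a + (L1 + L2))%nat with (a + L1 + L2)%nat by lia. lia.
Qed.

Lemma count_zero : forall (F : nat -> Prop) a L, (forall j, (j < L)%nat -> ~ F (a + j)%nat) ->
  count_in F a L = 0%nat.
Proof.
  intros F a L H; induction L; simpl; auto.
  destruct excluded_middle_informative. { exfalso; eapply H; [|eauto]; lia. }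
  apply IHL. intros; apply H; lia.
Qed.

Lemma count_gap : forall (Q : nat -> Prop) g, (1 <= g)%nat ->
  (forall n n', Q n -> Q n' -> (n < n')%nat -> (n + g <= n')%nat) ->
  forall L a, (count_in Q a L * g <= L + g)%nat.
Proof.
  intros Q g Hg Hgap L. induction L as [L IH] using lt_wf_ind. intro a.
  destruct L as [|L']; simpl; [lia|].
  destruct (excluded_middle_informative (Q (a + L')%nat)) as [HQ|HQ].
  - destruct (Nat.lt_ge_cases L' g).
    + rewrite count_zero. lia. intros j Hj Hq. specialize (Hgap _ _ Hq HQ). lia.
    + replace (count_in Q a L') with (count_in Q a ((L' - g + 1) + (g - 1))) by (f_equal; lia).
      rewrite count_split. rewrite (count_zero _ _ (g - 1)).
      * pose proof (IH (L' - g + 1)%nat ltac:(lia) a). nia.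
      * intros j Hj Hq. specialize (Hgap _ _ Hq HQ). lia.
  - pose proof (IH L' ltac:(lia) a). lia.
Qed.

Lemma count_pow : forall c G, (1 <= G)%nat -> forall a L,
  (count_in (fun n => ispow (n + c) = true) a L * G <= G * G + L + G)%nat.
Proof.
  intros c G HG a L.
  pose proof (count_mono (fun n => ispow (n + c) = true)
     (fun n => (n < G)%nat \/ ((G <= n)%nat /\ ispow (n + c) = true)) a L) as H1.
  assert (H2 := count_or (fun n => (n < G)%nat) (fun n => ((G <= n)%nat /\ ispow (n + c) = true)) a L).
  rewrite count_lt in H2.
  assert (H3 := count_gap (fun n => ((G <= n)%nat /\ ispow (n + c) = true)) G HG).
  assert (H4 : forall n n', (G <= n)%nat /\ ispow (n + c) = true ->
     (G <= n')%nat /\ ispow (n' + c) = true -> (n < n')%nat -> (n + G <= n')%nat).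
  { intros n n' [A B] [C D] E. pose proof (pow_gap _ _ B D ltac:(lia)). lia. }
  specialize (H3 H4 L a).
  assert (count_in (fun n => ispow (n + c) = true) a L <=
     Nat.min L (G - a) + count_in (fun n => (G <= n)%nat /\ ispow (n + c) = true) a L)%nat.
  { etransitivity; [apply H1|exact H2]. intros n Hn. destruct (Nat.lt_ge_cases n G); auto. }
  nia.
Qed.

Lemma count_exK : forall c G, (1 <= G)%nat -> forall K a L,
  (count_in (fun n => exists i, (i < K)%nat /\ ispow (n + i + c) = true) a L * G
     <= K * (G * G + L + G))%nat.
Proof.
  intros c G HG K a L. induction K.
  - rewrite count_zero. lia. intros j _ [i [Hi _]]. lia.
  - pose proof (count_mono (fun n => exists i, (i < S K)%nat /\ ispow (n + i + c) = true)
      (fun n => (exists i, (i < K)%nat /\ ispow (n + i + c) = true) \/ ispow (n + (K + c)) = true) a L) as H1.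
    pose proof (count_or (fun n => (exists i, (i < K)%nat /\ ispow (n + i + c) = true))
       (fun n => ispow (n + (K + c)) = true) a L) as H2.
    pose proof (count_pow (K + c) G HG a L) as H3.
    assert (count_in (fun n => exists i, (i < S K)%nat /\ ispow (n + i + c) = true) a L <=
      count_in (fun n => (exists i, (i < K)%nat /\ ispow (n + i + c) = true)) a L +
      count_in (fun n => ispow (n + (K + c)) = true) a L)%nat.
    { etransitivity; [apply H1|exact H2]. intros n [i [Hi Hp]].
      destruct (Nat.eq_dec i K). { right. subst. rewrite <- Hp. f_equal. lia. }
      left. exists i. split; auto. lia. }
    nia.
Qed.


Lemma nat_above : forall r : R, exists N : nat, (1 <= N)%nat /\ r < INR N.
Proof.
  intro r. destruct (INR_unbounded r) as [n Hn]. exists (S n). split; [lia|].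
  rewrite S_INR. lra.
Qed.

Lemma density_from_bound : forall (Good : nat -> Prop) (D : nat),
  (forall G, (1 <= G)%nat -> exists C, forall a L,
     (count_in (fun n => ~ Good n) a L * G <= C * G + D * L)%nat) ->
  banach_density_one Good.
Proof.
  intros Good D H lam Hlam.
  set (r := 1 - lam). assert (Hr : 0 < r) by (unfold r; lra).
  destruct (nat_above (2 * INR D / r)) as [G [HG1 HG]].
  destruct (H G HG1) as [C HC].
  destruct (nat_above (2 * INR C / r)) as [N [HN1 HN]].
  exists N. split; auto. intros a L HL.
  pose proof (count_compl Good a L) as E.
  specialize (HC a L).
  set (b := count_in (fun n => ~ Good n) a L) in *.
  set (c := count_in Good a L) in *.
  assert (Ec : INR c = INR L - INR b).
  { rewrite <- E. rewrite plus_INR. lra. }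
  apply le_INR in HC. rewrite plus_INR, !mult_INR in HC.
  apply le_INR in HL.
  assert (HGp : 0 < INR G) by (apply lt_0_INR; lia).
  assert (HG' : 2 * INR D < INR G * r).
  { apply (Rmult_lt_compat_r r) in HG; auto. unfold Rdiv in HG.
    rewrite Rmult_assoc, Rinv_l in HG by lra. lra. }
  assert (HN' : 2 * INR C < INR N * r).
  { apply (Rmult_lt_compat_r r) in HN; auto. unfold Rdiv in HN.
    rewrite Rmult_assoc, Rinv_l in HN by lra. lra. }
  assert (HD0 : 0 <= INR D) by apply pos_INR.
  assert (HL0 : 0 <= INR L) by apply pos_INR.
  assert (A1 : 2 * INR D * INR L <= INR G * r * INR L) by (apply Rmult_le_compat_r; lra).
  assert (A2 : 2 * INR C * INR G <= INR L * r * INR G).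
  { apply Rmult_le_compat_r; [lra|]. assert (INR N * r <= INR L * r) by (apply Rmult_le_compat_r; lra). lra. }
  assert (A3 : INR b * INR G <= r * INR L * INR G) by lra.
  assert (A4 : INR b <= r * INR L).
  { apply (Rmult_le_reg_r (INR G)); auto. }
  rewrite Ec. unfold r in A4. lra.
Qed.


Definition z0 : Sigma := fun _ => false.
Definition b0 : Sigma := fun i => Nat.eqb i 0.

Lemma win1 : forall k u t K, (k <= 2 ^ t)%nat -> (K <= 2 ^ t)%nat -> ee k u (idx t) = true ->
  forall j, (j < K)%nat -> b0 j = ff k u (2 ^ t + j).
Proof.
  intros k u t K Hk HK He j Hj. destruct j as [|j].
  - rewrite Nat.add_0_r, ff_pow; auto.
  - simpl b0. symmetry. apply ff_zero; [lia|]. apply (notpow t); simpl; lia.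
Qed.

Lemma win0 : forall k u t K p, (k <= p)%nat -> (2 ^ t < p)%nat -> (p + K <= 2 ^ S t)%nat ->
  forall j, (j < K)%nat -> z0 j = ff k u (p + j).
Proof.
  intros. unfold z0. symmetry. apply ff_zero; [lia|]. apply (notpow t); lia.
Qed.

Lemma key : forall m k u m' k' v, gg m k u <> gg m' k' v -> forall K N, exists n, (N <= n)%nat /\
  ((agree_upto K b0 (shift_iter n (gg m k u)) /\ agree_upto K z0 (shift_iter n (gg m' k' v))) \/
   (agree_upto K z0 (shift_iter n (gg m k u)) /\ agree_upto K b0 (shift_iter n (gg m' k' v)))).
Proof.
  intros m k u m' k' v Hne K N.
  destruct (Nat.lt_trichotomy m m') as [Hm|[Hm|Hm]].
  - destruct (idx_inf 0 (N + m' + k + k' + K + 1)) as [t [_ [Ht Hi]]].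
    exists (2 ^ t - m)%nat. split; [lia|]. left. split.
    + intros j Hj. rewrite gg_app. replace (m + (2 ^ t - m + j))%nat with (2 ^ t + j)%nat by lia.
      apply (win1 k u t K); try lia. rewrite Hi. reflexivity.
    + intros j Hj. rewrite gg_app.
      replace (m' + (2 ^ t - m + j))%nat with ((2 ^ t + (m' - m)) + j)%nat by lia.
      apply (win0 k' v t K); try lia. simpl. lia.
  - subst m'.
    assert (Hex : exists i, ee k u i <> ee k' v i).
    { apply NNPP. intro Hn. apply Hne.
      assert (He : forall i, ee k u i = ee k' v i).
      { intro i. apply NNPP. intro. apply Hn. exists i. auto. }
      destruct (decode _ _ _ _ He) as [-> Huv].
      apply functional_extensionality in Huv. subst. reflexivity. }
    destruct Hex as [i Hi'].
    destruct (idx_inf i (N + m + k + k' + K + 1)) as [t [_ [Ht Hi]]].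
    exists (2 ^ t - m)%nat. split; [lia|].
    assert (E : forall (kk : nat) uu j, shift_iter (2 ^ t - m) (gg m kk uu) j = ff kk uu (2 ^ t + j)).
    { intros. rewrite gg_app. f_equal. lia. }
    rewrite <- Hi in Hi'.
    destruct (ee k u (idx t)) eqn:E1; destruct (ee k' v (idx t)) eqn:E2; try congruence.
    + left. split; intros j Hj; rewrite E.
      * apply (win1 k u t K); try lia. exact E1.
      * destruct j as [|j].
        -- rewrite Nat.add_0_r, ff_pow by lia. rewrite E2. reflexivity.
        -- unfold z0. symmetry. apply ff_zero; [lia|]. apply (notpow t); simpl; lia.
    + right. split; intros j Hj; rewrite E.
      * destruct j as [|j].
        -- rewrite Nat.add_0_r, ff_pow by lia. rewrite E1. reflexivity.
        -- unfold z0. symmetry. apply ff_zero; [lia|]. apply (notpow t); simpl; lia.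
      * apply (win1 k' v t K); try lia. exact E2.
  - destruct (idx_inf 0 (N + m + k + k' + K + 1)) as [t [_ [Ht Hi]]].
    exists (2 ^ t - m')%nat. split; [lia|]. right. split.
    + intros j Hj. rewrite gg_app.
      replace (m + (2 ^ t - m' + j))%nat with ((2 ^ t + (m - m')) + j)%nat by lia.
      apply (win0 k u t K); try lia. simpl. lia.
    + intros j Hj. rewrite gg_app. replace (m' + (2 ^ t - m' + j))%nat with (2 ^ t + j)%nat by lia.
      apply (win1 k' v t K); try lia. rewrite Hi. reflexivity.
Qed.


Lemma prox : forall d, compatible_metric d -> forall m k u m' k' v,
  banach_proximal d (gg m k u) (gg m' k' v).
Proof.
  intros d [[Hnn [Hz [Hsym Htri]]] [H2 H3]] m k u m' k' v eps Heps.
  destruct (H2 z0 (eps / 2) ltac:(lra)) as [K HK].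
  apply density_from_bound with (D := (2 * K)%nat).
  intros G HG. exists (k + k' + 2 * K * (G + 1))%nat. intros a L.
  set (B1 := fun n => (exists i, (i < K)%nat /\ ispow (n + i + m) = true)).
  set (B2 := fun n => (exists i, (i < K)%nat /\ ispow (n + i + m') = true)).
  assert (Hsub : forall n, ~ d (shift_iter n (gg m k u)) (shift_iter n (gg m' k' v)) < eps ->
     (n < k + k')%nat \/ (B1 n \/ B2 n)).
  { intros n Hn. apply NNPP. intro Hc. apply Hn.
    assert (Hk : (k + k' <= n)%nat) by (destruct (Nat.lt_ge_cases n (k + k')); tauto).
    assert (A : forall mm kk uu, (kk <= n)%nat ->
       (forall i, (i < K)%nat -> ispow (n + i + mm) = false) ->
       agree_upto K z0 (shift_iter n (gg mm kk uu))).
    { intros mm kk uu Hkk Hp i Hi. rewrite gg_app. unfold z0. symmetry.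
      apply ff_zero; [lia|]. rewrite <- (Hp i Hi). f_equal. lia. }
    assert (X1 := A m k u ltac:(lia) ltac:(intros i Hi; destruct (ispow (n + i + m)) eqn:E; auto;
       exfalso; apply Hc; right; left; exists i; auto)).
    assert (X2 := A m' k' v ltac:(lia) ltac:(intros i Hi; destruct (ispow (n + i + m')) eqn:E; auto;
       exfalso; apply Hc; right; right; exists i; auto)).
    apply HK in X1. apply HK in X2.
    pose proof (Htri (shift_iter n (gg m k u)) z0 (shift_iter n (gg m' k' v))).
    rewrite (Hsym _ z0) in H. lra. }
  pose proof (count_mono _ _ a L Hsub) as C1.
  pose proof (count_or (fun n => (n < k + k')%nat) (fun n => B1 n \/ B2 n) a L) as C2.
  pose proof (count_or B1 B2 a L) as C3.
  rewrite count_lt in C2.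
  pose proof (count_exK m G HG K a L) as C4.
  pose proof (count_exK m' G HG K a L) as C5.
  fold B1 in C4. fold B2 in C5.
  set (x := count_in (fun n => ~ d (shift_iter n (gg m k u)) (shift_iter n (gg m' k' v)) < eps) a L) in *.
  set (y1 := count_in B1 a L) in *. set (y2 := count_in B2 a L) in *.
  set (w := count_in (fun n => B1 n \/ B2 n) a L) in *.
  assert (x <= (k + k') + y1 + y2)%nat by lia.
  nia.
Qed.

Lemma nonasym : forall d, compatible_metric d -> forall m k u m' k' v,
  gg m k u <> gg m' k' v -> ~ asymptotic d (gg m k u) (gg m' k' v).
Proof.
  intros d [[Hnn [Hz [Hsym Htri]]] [H2 H3]] m k u m' k' v Hne Has.
  destruct (H3 z0 1%nat) as [ea [Hea Ha]].
  destruct (H3 b0 1%nat) as [eb [Heb Hb]].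
  set (del := Rmin ea eb / 2).
  assert (Hdel : 0 < del) by (unfold del; apply Rmin_case; lra).
  assert (Hdela : 2 * del <= ea) by (unfold del; pose proof (Rmin_l ea eb); lra).
  assert (Hdelb : 2 * del <= eb) by (unfold del; pose proof (Rmin_r ea eb); lra).
  destruct (H2 z0 del Hdel) as [ka Hka].
  destruct (H2 b0 del Hdel) as [kb Hkb].
  destruct (Has del Hdel) as [N HN].
  destruct (key m k u m' k' v Hne (S (ka + kb)) N) as [n [Hn Hw]].
  specialize (HN n Hn).
  set (X := shift_iter n (gg m k u)) in *. set (Y := shift_iter n (gg m' k' v)) in *.
  assert (Mon : forall K1 K2 p q, (K1 <= K2)%nat -> agree_upto K2 p q -> agree_upto K1 p q).
  { intros K1 K2 p q HK Hpq i Hi. apply Hpq. lia. }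
  destruct Hw as [[W1 W0]|[W0 W1]].
  - assert (D1 : d b0 X < del) by (apply Hkb; eapply Mon; [|exact W1]; lia).
    assert (D0 : d z0 Y < del) by (apply Hka; eapply Mon; [|exact W0]; lia).
    assert (d z0 X < ea).
    { pose proof (Htri z0 Y X). rewrite (Hsym Y X) in H. lra. }
    apply Ha in H. specialize (H 0%nat ltac:(lia)).
    specialize (W1 0%nat ltac:(lia)). unfold z0, b0 in *. simpl in *. congruence.
  - assert (D1 : d b0 Y < del) by (apply Hkb; eapply Mon; [|exact W1]; lia).
    assert (D0 : d z0 X < del) by (apply Hka; eapply Mon; [|exact W0]; lia).
    assert (d z0 Y < ea).
    { pose proof (Htri z0 X Y). lra. }
    apply Ha in H. specialize (H 0%nat ltac:(lia)).
    specialize (W1 0%nat ltac:(lia)). unfold z0, b0 in *. simpl in *. congruence.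
Qed.

Theorem mainTheorem6 :
  forall d : Sigma -> Sigma -> R, compatible_metric d ->
  exists S : Sigma -> Prop,
    dense d S /\ mycielski d S /\
    (forall x, S x -> S (shift x)) /\
    banach_scrambled d S.
Proof.
  intros d Hd.
  exists (fun x => exists m k u, x = gg m k u).
  pose proof Hd as [[Hnn [Hz [Hsym Htri]]] [H2 H3]].
  split; [|split; [|split]].
  - intros x eps Heps. destruct (H2 x eps Heps) as [k Hk].
    exists (gg 0%nat k x). split; [exists 0%nat, k, x; reflexivity|].
    apply Hk. intros i Hi. unfold gg. simpl. unfold ff.
    rewrite (proj2 (Nat.ltb_lt i k) Hi). reflexivity.
  - exists (fun n y => exists u, y = gg (idx n) (Nat.sqrt n - idx n) u). split.
    + intro n. exists (gg (idx n) (Nat.sqrt n - idx n)). split; [|split].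
      * intros x eps Heps. destruct (H2 (gg (idx n) (Nat.sqrt n - idx n) x) eps Heps) as [j Hj].
        destruct (H3 x (j + idx n)%nat) as [e [He Hx]].
        exists e. split; auto. intros y Hy. apply Hj. apply gg_fin. auto.
      * apply gg_inj.
      * intro y. tauto.
    + intro y. split.
      * intros [m [k [u ->]]]. exists ((m + k) * (m + k) + m)%nat, u.
        rewrite idx_eq by lia. rewrite sqrt_eq by lia.
        replace (m + k - m)%nat with k by lia. reflexivity.
      * intros [n [u ->]]. eauto.
  - intros x [m [k [u ->]]]. exists (S m), k, u. reflexivity.
  - split.
    + exists (gg 0%nat 1%nat (fun _ => true)), (gg 0%nat 1%nat (fun _ => false)).
      split; [eauto|]. split; [eauto|].
      intro E. pose proof (f_equal (fun z => z 0%nat) E) as E0. simpl in E0. discriminate.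
    + intros x y [m [k [u ->]]] [m' [k' [v ->]]] Hne. split.
      * apply prox; auto.
      * apply nonasym; auto.
Qed.
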